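(* Assume $f_1,f_0$ are $\ell_1$-Lipschitz with constants $L_1,L_0$, and suppose the AA2 policy is applied at all times (in discrete time). If $$L_{AA2}:=\max_{0\le\Delta\le\pi\le1}\Big(2[\pi L_1+(1-\pi)L_0]+|f_1(\Delta,\pi-\Delta)-f_0(\Delta,\pi-\Delta)|\Big)<1,$$ then $|f_A(\pi,\pi')-f_B(\pi,\pi')|\le L_{AA2}|\pi-\pi'|$ for all $\pi,\pi'\in[0,1]$, and hence $|\pi_t(1|A)-\pi_t(1|B)|\to0$ for all initial profiles (society equalizes).
   Context: Two groups $A,B$; $\neg j$ is the group other than $j$. At time $t$ group $j$ has qualification profile $\pi_t(1|j)\in[0,1]$, $\pi_t(0|j)=1-\pi_t(1|j)$. Selection rates of a policy $\tau$: $\beta_t(v;j)=\tau(v;j)\pi_t(v|j)$. Dynamics: continuously differentiable $f_0,f_1:[0,1]^2\to[0,1]$, discrete time update $\pi_{t+1}(1|j)=\pi_t(1|j)f_1(\beta_t(0;j),\beta_t(1;j))+(1-\pi_t(1|j))f_0(\beta_t(0;j),\beta_t(1;j))$. ''$\ell_1$-Lipschitz with constant $L_i$'': $|f_i(x_1,x_2)-f_i(y_1,y_2)|\le L_i(|x_1-y_1|+|x_2-y_2|)$. Group $j$ is advantaged at time $t$ if $\pi_t(1|j)\ge\pi_t(1|\neg j)$. The AA2 policy with respect to advantaged $j$ is $\tau(1;j)=\tau(1;\neg j)=1$, $\tau(0;j)=0$, $\tau(0;\neg j)=(\pi_t(1|j)-\pi_t(1|\neg j))/(1-\pi_t(1|\neg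 j))$, i.e. selection rates $\beta_t(0;j)=0$, $\beta_t(1;j)=\pi_t(1|j)$, $\beta_t(0;\neg j)=\pi_t(1|j)-\pi_t(1|\neg j)$, $\beta_t(1;\neg j)=\pi_t(1|\neg j)$ (defined through these rates if a denominator vanishes). ''Applying AA2 at all times'' means at every $t$ AA2 is used with respect to the group advantaged at time $t$. With $\pi=\pi_t(1|A)$, $\pi'=\pi_t(1|B)$, the joint update is $\pi_{t+1}(1|A)=f_A(\pi,\pi')$, $\pi_{t+1}(1|B)=f_B(\pi,\pi')$. *)

(* Defs.v *)
From Stdlib Require Import Reals Lra.
Open Scope R_scope.

Definition in01 (x : R) : Prop := 0 <= x <= 1.

Definition continuous2 (g : R -> R -> R) : Prop :=
  forall x y eps, 0 < eps -> exists delta, 0 < delta /\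
    forall x' y', Rabs (x' - x) < delta -> Rabs (y' - y) < delta ->
      Rabs (g x' y' - g x y) < eps.

Definition C1_on_square (f : R -> R -> R) : Prop :=
  exists F D1 D2 : R -> R -> R,
    (forall x y, in01 x -> in01 y -> F x y = f x y) /\
    (forall x y, derivable_pt_lim (fun s => F s y) x (D1 x y)) /\
    (forall x y, derivable_pt_lim (fun s => F x s) y (D2 x y)) /\
    continuous2 D1 /\ continuous2 D2.

Definition maps_square_01 (f : R -> R -> R) : Prop :=
  forall x y, in01 x -> in01 y -> in01 (f x y).

Definition l1_lipschitz (f : R -> R -> R) (L : R) : Prop :=
  forall x1 x2 y1 y2, in01 x1 -> in01 x2 -> in01 y1 -> in01 y2 ->
    Rabs (f x1 x2 - f y1 y2) <= L * (Rabs (x1 - y1) + Rabs (x2 - y2)).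

Definition upd (f0 f1 : R -> R -> R) (p b0 b1 : R) : R :=
  p * f1 b0 b1 + (1 - p) * f0 b0 b1.

(* AA2 with advantaged group of profile p, disadvantaged of profile q <= p:
   advantaged rates (0, p); disadvantaged rates (p - q, q). *)
Definition upd_adv (f0 f1 : R -> R -> R) (p : R) : R := upd f0 f1 p 0 p.
Definition upd_dis (f0 f1 : R -> R -> R) (p q : R) : R := upd f0 f1 q (p - q) q.

(* joint update under AA2 w.r.t. the group advantaged at time t
   (A is taken as advantaged when pi = pi'; both choices agree then). *)
Definition fA (f0 f1 : R -> R -> R) (pi pi' : R) : R :=
  if Rle_dec pi' pi then upd_adv f0 f1 pi else upd_dis f0 f1 pi' pi.
Definition fB (f0 f1 : R -> R -> R) (pi pi' : R) : R :=
  if Rle_dec pi' pi then upd_dis f0 f1 pi pi' else upd_adv f0 f1 pi'.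

Fixpoint traj (f0 f1 : R -> R -> R) (p0 q0 : R) (t : nat) : R * R :=
  match t with
  | O => (p0, q0)
  | S t' => let '(p, q) := traj f0 f1 p0 q0 t' in (fA f0 f1 p q, fB f0 f1 p q)
  end.

Definition aa2_expr (f0 f1 : R -> R -> R) (L0 L1 D p : R) : R :=
  2 * (p * L1 + (1 - p) * L0) + Rabs (f1 D (p - D) - f0 D (p - D)).

Definition is_LAA2 (f0 f1 : R -> R -> R) (L0 L1 L : R) : Prop :=
  (forall D p, 0 <= D -> D <= p -> p <= 1 -> aa2_expr f0 f1 L0 L1 D p <= L) /\
  (exists D p, 0 <= D /\ D <= p /\ p <= 1 /\ aa2_expr f0 f1 L0 L1 D p = L).

(* Main.v *)
Require Import Defs.
From Stdlib Require Import Reals Lra.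
Open Scope R_scope.

Lemma key (f0 f1 : R -> R -> R) (L0 L1 LAA2 p q : R) :
  l1_lipschitz f0 L0 -> l1_lipschitz f1 L1 ->
  is_LAA2 f0 f1 L0 L1 LAA2 -> 0 <= q -> q <= p -> p <= 1 ->
  Rabs (upd_adv f0 f1 p - upd_dis f0 f1 p q) <= LAA2 * (p - q).
Proof.
  intros H0 H1 [HL _] Hq Hqp Hp.
  unfold upd_adv, upd_dis, upd.
  set (a := f1 0 p - f1 (p - q) q).
  set (b := f0 0 p - f0 (p - q) q).
  set (c := f1 (p - q) q - f0 (p - q) q).
  assert (E : p * f1 0 p + (1 - p) * f0 0 p - (q * f1 (p - q) q + (1 - q) * f0 (p - q) q)
             = p * a + (1 - p) * b + (p - q) * c) by (unfold a, b, c; ring).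
  rewrite E.
  assert (Ha : Rabs a <= L1 * (2 * (p - q))).
  { unfold a. replace (2 * (p - q)) with (Rabs (0 - (p - q)) + Rabs (p - q)).
    apply H1; unfold in01; lra.
    rewrite Rabs_left1 by lra. rewrite Rabs_right by lra. lra. }
  assert (Hb : Rabs b <= L0 * (2 * (p - q))).
  { unfold b. replace (2 * (p - q)) with (Rabs (0 - (p - q)) + Rabs (p - q)).
    apply H0; unfold in01; lra.
    rewrite Rabs_left1 by lra. rewrite Rabs_right by lra. lra. }
  assert (Hc := HL (p - q) p ltac:(lra) ltac:(lra) Hp).
  unfold aa2_expr in Hc. replace (p - (p - q)) with q in Hc by ring.
  fold c in Hc.
  eapply Rle_trans. apply Rabs_triang.
  eapply Rle_trans. apply Rplus_le_compat_r. apply Rabs_triang.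
  rewrite !Rabs_mult. rewrite (Rabs_right p) by lra.
  rewrite (Rabs_right (1-p)) by lra. rewrite (Rabs_right (p-q)) by lra.
  assert (p * Rabs a <= p * (L1 * (2 * (p - q)))) by (apply Rmult_le_compat_l; lra).
  assert ((1-p) * Rabs b <= (1-p) * (L0 * (2 * (p - q)))) by (apply Rmult_le_compat_l; lra).
  assert ((p - q) * (2 * (p * L1 + (1 - p) * L0) + Rabs c) <= (p - q) * LAA2)
    by (apply Rmult_le_compat_l; lra).
  nra.
Qed.

Lemma in01_upd (f0 f1 : R -> R -> R) p b0 b1 :
  maps_square_01 f0 -> maps_square_01 f1 -> in01 p -> in01 b0 -> in01 b1 ->
  in01 (upd f0 f1 p b0 b1).
Proof.
  intros M0 M1 Hp H0 H1. unfold upd.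
  destruct (M0 b0 b1 H0 H1), (M1 b0 b1 H0 H1). unfold in01 in *. nra.
Qed.

Theorem mainTheorem5 (f0 f1 : R -> R -> R) (L0 L1 LAA2 : R) :
  C1_on_square f0 -> C1_on_square f1 ->
  maps_square_01 f0 -> maps_square_01 f1 ->
  l1_lipschitz f0 L0 -> l1_lipschitz f1 L1 ->
  is_LAA2 f0 f1 L0 L1 LAA2 -> LAA2 < 1 ->
  (forall pi pi', in01 pi -> in01 pi' ->
     Rabs (fA f0 f1 pi pi' - fB f0 f1 pi pi') <= LAA2 * Rabs (pi - pi')) /\
  (forall p0 q0, in01 p0 -> in01 q0 ->
     Un_cv (fun t => Rabs (fst (traj f0 f1 p0 q0 t) - snd (traj f0 f1 p0 q0 t))) 0).
Proof.
  intros _ _ M0 M1 H0 H1 HL Hlt.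
  assert (Part1 : forall pi pi', in01 pi -> in01 pi' ->
     Rabs (fA f0 f1 pi pi' - fB f0 f1 pi pi') <= LAA2 * Rabs (pi - pi')).
  { intros p q [Hp0 Hp1] [Hq0 Hq1]. unfold fA, fB.
    destruct (Rle_dec q p) as [Hr|Hr]; [|apply Rnot_le_lt in Hr].
    - rewrite (Rabs_right (p - q)) by lra. apply (key f0 f1 L0 L1); auto; lra.
    - rewrite Rabs_minus_sym. rewrite (Rabs_left1 (p - q)) by lra.
      replace (- (p - q)) with (q - p) by ring. apply (key f0 f1 L0 L1); auto; lra. }
  split; [exact Part1|].
  assert (HL0 : 0 <= L0).
  { assert (h := H0 0 0 1 0). unfold in01 in h.
    assert (h' : Rabs (f0 0 0 - f0 1 0) <= L0 * (Rabs (0 - 1) + Rabs (0 - 0))) by (apply h; lra).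
    replace (Rabs (0 - 1) + Rabs (0 - 0)) with 1 in h'.
    pose proof (Rabs_pos (f0 0 0 - f0 1 0)). lra.
    rewrite Rminus_0_r, Rminus_0_l, Rabs_R0, Rabs_Ropp, Rabs_R1. ring. }
  assert (HLpos : 0 <= LAA2).
  { destruct HL as [HL _]. assert (h := HL 0 0 ltac:(lra) ltac:(lra) ltac:(lra)).
    unfold aa2_expr in h. pose proof (Rabs_pos (f1 0 (0 - 0) - f0 0 (0 - 0))). lra. }
  intros p0 q0 Hp0 Hq0.
  assert (Inv : forall t, in01 (fst (traj f0 f1 p0 q0 t)) /\ in01 (snd (traj f0 f1 p0 q0 t))).
  { induction t as [|t IH]; simpl; [auto|].
    destruct (traj f0 f1 p0 q0 t) as [p q]. simpl in *. destruct IH as [[? ?] [? ?]].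
    unfold fA, fB, upd_adv, upd_dis; destruct (Rle_dec q p) as [Hr|Hr]; [|apply Rnot_le_lt in Hr]; split;
      apply in01_upd; auto; unfold in01 in *; lra. }
  assert (Bnd : forall t, Rabs (fst (traj f0 f1 p0 q0 t) - snd (traj f0 f1 p0 q0 t)) <= LAA2 ^ t).
  { induction t as [|t IH].
    - simpl. destruct Hp0, Hq0. unfold Rabs; destruct Rcase_abs; lra.
    - specialize (Inv t). simpl. destruct (traj f0 f1 p0 q0 t) as [p q]. simpl in *.
      destruct Inv. eapply Rle_trans. apply Part1; auto.
      apply Rmult_le_compat_l; auto. }
  intros eps Heps.
  destruct (pow_lt_1_zero LAA2 ltac:(rewrite Rabs_right; lra) eps Heps) as [N HN].
  exists N. intros n Hn. unfold Rdist. rewrite Rminus_0_r, Rabs_Rabsolu.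
  eapply Rle_lt_trans. apply Bnd. specialize (HN n Hn).
  rewrite Rabs_right in HN. exact HN. apply Rle_ge, pow_le; auto.
Qed.
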